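(* Consider a random family with random number of children $N\ge 1$ and sexes $S_1,S_2,\dots\in\{\mathrm{M},\mathrm{F}\}$ of its children in birth order ($S_k$ defined on the event $N\ge k$). Assume: (i) (random coin toss) there is $p_M\in(0,1)$ such that $P(S_1=\mathrm{M})=p_M$ and, for every $k\ge 2$, $P(S_k=\mathrm{M}\mid N\ge k, S_1,\dots,S_{k-1})=p_M$; write $p_F=1-p_M$; (ii) the sex of the first child does not predict whether the family has a second child: $P(N\ge 2\mid S_1=\mathrm{M})=P(N\ge2\mid S_1=\mathrm{F})$; (iii) there are numbers $p_S>0$ and $p_D$ with $P(N\ge 3\mid N\ge 2, S_1=S_2=\mathrm{M})=P(N\ge 3\mid N\ge 2, S_1=S_2=\mathrm{F})=p_S$ and $P(N\ge 3\mid N\ge 2, S_1=\mathrm{M},S_2=\mathrm{F})=P(N\ge 3\mid N\ge 2, S_1=\mathrm{F},S_2=\mathrm{M})=p_D$. Then \[ P\left(\text{MM? or FF?}\mid N\geq 3\right) =\frac{1}{2 p_Fp_M p_D/p_S +p_F^2+p_M^2}\bigl(p_M^2+p_F^2\bigr). \] If additionally $p_S>p_D$, then \[ \frac{1}{2 p_Fp_M p_D/p_S +p_F^2+p_M^2}>1. \]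
   Context: All births are singletons. ''MM?'' denotes the event $S_1=S_2=\mathrm{M}$ (the sex of the third child is ignored), and ''FF?'' denotes $S_1=S_2=\mathrm{F}$; these are considered together with the conditioning event $N\ge 3$. All conditioning events appearing are assumed to have positive probability. *)

(* Defs.v *)
From HB Require Import structures.
From mathcomp Require Import all_boot all_order all_algebra.
From mathcomp Require Import all_classical all_reals all_analysis.
Set Implicit Arguments. Unset Strict Implicit. Unset Printing Implicit Defensive.
Import Order.TTheory GRing.Theory Num.Theory.
Local Open Scope classical_set_scope.
Local Open Scope ring_scope.

Definition Pr {d} {T : measurableType d} {R : realType}
  (P : probability T R) (A : set T) : R := fine (P A).

Definition cond {d} {T : measurableType d} {R : realType}
  (P : probability T R) (A B : set T) : R := Pr P (A `&` B) / Pr P B.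

(* Main.v *)
Require Import Defs.
From HB Require Import structures.
From mathcomp Require Import all_boot all_order all_algebra.
From mathcomp Require Import all_classical all_reals all_analysis.
From mathcomp Require Import ring lra.
Import Order.TTheory GRing.Theory Num.Theory.
Local Open Scope classical_set_scope.
Local Open Scope ring_scope.
Lemma Pr_ext {d} {T : measurableType d} {R : realType} (P : probability T R)
  {A B : set T} : (forall w, A w <-> B w) -> Pr P A = Pr P B.
Proof.
move=> h; congr Pr; apply/seteqP; split=> w /=; by move/h.
Qed.

Lemma Pr_ge0 {d} {T : measurableType d} {R : realType} (P : probability T R)
  (A : set T) : 0 <= Pr P A.
Proof. by apply: fine_ge0; apply: measure_ge0. Qed.

Lemma Pr_split {d} {T : measurableType d} {R : realType} (P : probability T R)
  (A B C : set T) : measurable B -> measurable C ->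
  (forall w, A w <-> B w \/ C w) -> (forall w, B w -> C w -> False) ->
  Pr P A = Pr P B + Pr P C.
Proof.
move=> mB mC hA hBC.
have -> : A = B `|` C by apply/seteqP; split=> w /=; move/hA.
rewrite /Pr measureU //; last first.
  by apply/seteqP; split=> w //= [] /hBC h /h.
rewrite fineD //; exact: fin_num_measure.
Qed.

Lemma Pr_setT {d} {T : measurableType d} {R : realType} (P : probability T R) :
  Pr P setT = 1.
Proof. by rewrite /Pr probability_setT. Qed.

Lemma mext {d} {T : measurableType d} {A B : set T} :
  (forall w, A w <-> B w) -> measurable B -> measurable A.
Proof. by move=> h; have -> : A = B by apply/seteqP; split=> w /=; move/h. Qed.

Theorem theorem2 (R : realType) (d : measure_display) (T : measurableType d)
  (P : probability T R) (N : T -> nat) (S : nat -> T -> bool)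
  (pM pS pD : R)
  (hN1 : forall w, (1 <= N w)%N)
  (mN : forall k, measurable [set w | (k <= N w)%N])
  (mS : forall k b, measurable [set w | (k <= N w)%N /\ S k w = b])
  (hpM : 0 < pM < 1)
  (hi1 : Pr P [set w | (1 <= N w)%N /\ S 1%N w = true] = pM)
  (hik : forall (k : nat) (s : seq bool), (2 <= k)%N -> size s = k.-1 ->
     0 < Pr P [set w | (k <= N w)%N /\
                 forall i, (i < k.-1)%N -> S i.+1 w = nth false s i] ->
     cond P [set w | S k w = true]
            [set w | (k <= N w)%N /\
                 forall i, (i < k.-1)%N -> S i.+1 w = nth false s i] = pM)
  (hii : cond P [set w | (2 <= N w)%N] [set w | S 1%N w = true]
       = cond P [set w | (2 <= N w)%N] [set w | S 1%N w = false])
  (hpS : 0 < pS)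
  (hpos2 : forall a b : bool,
     0 < Pr P [set w | (2 <= N w)%N /\ S 1%N w = a /\ S 2%N w = b])
  (hpos3 : 0 < Pr P [set w | (3 <= N w)%N])
  (hiiiS : forall a : bool,
     cond P [set w | (3 <= N w)%N]
            [set w | (2 <= N w)%N /\ S 1%N w = a /\ S 2%N w = a] = pS)
  (hiiiD : forall a : bool,
     cond P [set w | (3 <= N w)%N]
            [set w | (2 <= N w)%N /\ S 1%N w = a /\ S 2%N w = ~~ a] = pD) :
  let pF := 1 - pM in
  cond P [set w | S 1%N w = S 2%N w] [set w | (3 <= N w)%N]
    = (2 * pF * pM * pD / pS + pF ^+ 2 + pM ^+ 2)^-1 * (pM ^+ 2 + pF ^+ 2)
  /\ (pD < pS -> 1 < (2 * pF * pM * pD / pS + pF ^+ 2 + pM ^+ 2)^-1).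
Proof.
move=> pF.
set F := fun a : bool => [set w | (2 <= N w)%N /\ S 1%N w = a].
set E := fun a b : bool => [set w | (2 <= N w)%N /\ S 1%N w = a /\ S 2%N w = b].
set H := fun a b : bool => [set w | (3 <= N w)%N] `&` E a b.
have mE : forall a b, measurable (E a b).
  move=> a b; rewrite /E; apply: (mext (B := [set w | (2 <= N w)%N] `&`
     ([set w | (1 <= N w)%N /\ S 1%N w = a] `&` [set w | (2 <= N w)%N /\ S 2%N w = b]))).
    move=> w /=; split; first by case=> h [h1 h2]; rewrite hN1.
    by case=> h [[_ h1] [_ h2]].
  by apply: measurableI => //; apply: measurableI.
have mH : forall a b, measurable (H a b) by move=> a b; apply: measurableI.
have mG : forall a, measurable [set w | (3 <= N w)%N /\ S 1%N w = a].
  move=> a; apply: (mext (B := [set w | (3 <= N w)%N] `&` [set w | (1 <= N w)%N /\ S 1%N w = a])).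
    by move=> w /=; split; [case=> h h1; rewrite hN1 | case=> h [_ h1]].
  exact: measurableI.
have hF : forall a, Pr P (F a) = Pr P (E a true) + Pr P (E a false).
  move=> a; apply: Pr_split => // w; rewrite /F /E /=.
    by split; [case=> h1 h2; case: (S 2%N w); [left|right] | case=> -[h1 [h2 _]]].
  by move=> [_ [_ ->]] [_ [_]].
have hFpos : forall a, 0 < Pr P (F a).
  by move=> a; rewrite hF; apply: addr_gt0; exact: hpos2.
have hE1 : forall a, Pr P (E a true) = pM * Pr P (F a).
  move=> a.
  have hG : forall w, [set w | (2 <= N w)%N /\
                 forall i, (i < 2.-1)%N -> S i.+1 w = nth false [:: a] i] w <-> F a w.
    move=> w /=; split; first by case=> h1 h2; split=> //; exact: (h2 0%N).
    by case=> h1 h2; split=> // -[|i] //.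
  have := hik 2%N [:: a] isT erefl.
  rewrite (Pr_ext P hG) => /(_ (hFpos a)).
  rewrite /cond (Pr_ext P hG).
  have -> : Pr P ([set w | S 2%N w = true] `&` [set w | (2 <= N w)%N /\
                 forall i, (i < 2.-1)%N -> S i.+1 w = nth false [:: a] i]) = Pr P (E a true).
    apply: Pr_ext => w /=; split; first by case=> h1 [h2 h3]; split=> //; split=> //; exact: (h3 0%N).
    by case=> h1 [h2 h3]; split=> //; split=> // -[|i].
  move=> h; rewrite -h divfK //; exact: lt0r_neq0 (hFpos a).
have hE0 : forall a, Pr P (E a false) = pF * Pr P (F a).
  by move=> a; rewrite /pF mulrBl mul1r -hE1 hF [X in _ = X - _]addrC addrK.
have hS1 : Pr P [set w | S 1%N w = true] = pM.
  by rewrite -hi1; apply: Pr_ext => w /=; split; [move=> ->; rewrite hN1 | case].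
have hS0 : Pr P [set w | S 1%N w = false] = pF.
  have := Pr_setT P.
  rewrite (@Pr_split _ _ _ P setT [set w | S 1%N w = true] [set w | S 1%N w = false]).
  - by rewrite hS1 /pF => <-; rewrite [X in _ = X - _]addrC addrK.
  - apply: (mext (B := [set w | (1 <= N w)%N /\ S 1%N w = true])) => //.
    by move=> w /=; split; [move=> ->; rewrite hN1 | case].
  - apply: (mext (B := [set w | (1 <= N w)%N /\ S 1%N w = false])) => //.
    by move=> w /=; split; [move=> ->; rewrite hN1 | case].
  - by move=> w /=; split=> // _; case: (S 1%N w); [left|right].
  - by move=> w /= ->.
have hpM0 : 0 < pM by case/andP: hpM.
have hpF0 : 0 < pF by rewrite /pF subr_gt0; case/andP: hpM.
set q := Pr P (F true) / pM.
have hFt : Pr P (F true) = q * pM by rewrite /q divfK // lt0r_neq0.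
have hFf : Pr P (F false) = q * pF.
  move: hii; rewrite /cond hS1 hS0.
  rewrite (Pr_ext P (B := F true)); last by move=> w /=; split; case.
  rewrite (Pr_ext P (A := _ `&` _) (B := F false)); last by move=> w /=; split; case.
  by rewrite -/q => ->; rewrite divfK // lt0r_neq0.
have hq : 0 < q by rewrite /q divr_gt0 // hFpos.
have hHS : forall a, Pr P (H a a) = pS * Pr P (E a a).
  move=> a; have := hiiiS a; rewrite /cond => <-; rewrite divfK // lt0r_neq0 //.
have hHD : forall a, Pr P (H a (~~ a)) = pD * Pr P (E a (~~ a)).
  move=> a; have := hiiiD a; rewrite /cond => <-; rewrite divfK // lt0r_neq0 //.
have hN3 : Pr P [set w | (3 <= N w)%N] =
   Pr P (H true true) + Pr P (H true false) + Pr P (H false true) + Pr P (H false false).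
  have sp1 : forall w, [set w | (3 <= N w)%N] w <->
      [set w | (3 <= N w)%N /\ S 1%N w = true] w \/ [set w | (3 <= N w)%N /\ S 1%N w = false] w.
    by move=> w /=; split; [case: (S 1%N w) => h; [left|right] | case; case].
  have sp2 : forall w, [set w | (3 <= N w)%N /\ S 1%N w = true] w ->
      [set w | (3 <= N w)%N /\ S 1%N w = false] w -> False.
    by move=> w /= [_ ->] [].
  rewrite (Pr_split P _ _ _ (mG true) (mG false) sp1 sp2).
  rewrite -[RHS]addrA; congr (_ + _).
    apply: Pr_split => // w; rewrite /H /E /=.
      split; first by case=> h1 h2; case e: (S 2%N w); [left|right]; do !split => //; exact: ltnW.
      by case=> -[h1 [_ [h2 _]]].
    by move=> [_ [_ [_ ->]]] [_ [_ [_]]].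
  apply: Pr_split => // w; rewrite /H /E /=.
    split; first by case=> h1 h2; case e: (S 2%N w); [left|right]; do !split => //; exact: ltnW.
    by case=> -[h1 [_ [h2 _]]].
  by move=> [_ [_ [_ ->]]] [_ [_ [_]]].
have hNum : Pr P ([set w | S 1%N w = S 2%N w] `&` [set w | (3 <= N w)%N]) =
   Pr P (H true true) + Pr P (H false false).
  apply: Pr_split => // w; rewrite /H /E /=.
    split; first by case=> h1 h2; move: h1; case e: (S 1%N w) => h1; [left|right];
       do !split => //; exact: ltnW.
    by case=> -[h1 [_ [h2 h3]]]; rewrite h2 h3.
  by move=> [_ [_ [-> _]]] [_ [_ []]].
have hD := hHD true; have hD' := hHD false; simpl in hD, hD'.
have e11 := hE1 true; have e01 := hE1 false; have e10 := hE0 true; have e00 := hE0 false.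
rewrite hFt in e11 e10; rewrite hFf in e01 e00.
have hpD : 0 <= pD.
  have := hiiiD true; rewrite /cond => <-; apply: divr_ge0; exact: Pr_ge0.
split.
  rewrite /cond hNum hN3 (hHS true) (hHS false) hD hD' e11 e00 e10 e01.
  field.
  have hpM2 : 0 < pM ^+ 2 * pS by apply: mulr_gt0 => //; apply: exprn_gt0.
  have hpF2 : 0 <= pF ^+ 2 * pS by apply: mulr_ge0; [apply: exprn_ge0; exact: ltW | exact: ltW].
  have hx : 0 <= 2 * pF * pM * pD by apply: mulr_ge0 => //; apply: mulr_ge0; [apply: mulr_ge0|]; exact: ltW.
  apply/and3P; split; apply: lt0r_neq0 => //; first by lra.
  have a1 : 0 < pS * (pM * (q * pM)) by apply: mulr_gt0 => //; apply: mulr_gt0 => //; apply: mulr_gt0.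
  have a2 : 0 <= pD * (pF * (q * pM)) by apply: mulr_ge0 => //; apply: mulr_ge0; [|apply: mulr_ge0]; exact: ltW.
  have a3 : 0 <= pD * (pM * (q * pF)) by apply: mulr_ge0 => //; apply: mulr_ge0; [|apply: mulr_ge0]; exact: ltW.
  have a4 : 0 <= pS * (pF * (q * pF)) by apply: mulr_ge0; [|apply: mulr_ge0; [|apply: mulr_ge0]]; exact: ltW.
  lra.
move=> hlt.
have hr0 : 0 <= pD / pS by apply: divr_ge0 => //; exact: ltW.
have hr1 : pD / pS < 1 by rewrite ltr_pdivrMr // mul1r.
have hm : 0 < pF * pM by apply: mulr_gt0.
have -> : 2 * pF * pM * pD / pS = 2 * pF * pM * (pD / pS) by rewrite mulrA.
rewrite invf_gt1.
  rewrite /pF in hm *. set r := pD / pS in hr0 hr1 *. 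
  nra.
rewrite /pF in hm *. set r := pD / pS in hr0 hr1 *. nra.
Qed.
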